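(* A regular Hausdorff space $X$ is $c$-semi-stratifiable if and only if $\mathcal{F}(X)$ is $c$-semi-stratifiable.
   Context: $\mathcal{F}(X)$ is the set of nonempty finite subsets of $X$ with the Vietoris topology (base: $\langle U_1,\dots,U_k\rangle=\{A: A\subset\bigcup_i U_i,\ A\cap U_j\neq\emptyset\ \forall j\}$, $U_i$ open in $X$). A space $Y$ is $c$-semi-stratifiable if to every compact $C\subset Y$ one can assign a sequence $\{G(n,C)\}_{n\in\omega}$ of open subsets of $Y$ such that (1) $C=\bigcap_{n\in\omega}G(n,C)$, and (2) if $C\subset F$ with $C,F$ compact, then $G(n,C)\subset G(n,F)$ for all $n$. *)

(* Defs.v *)
From HB Require Import structures.
From mathcomp Require Import all_boot all_order.
From mathcomp Require Import all_classical all_reals all_analysis.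
Set Implicit Arguments. Unset Strict Implicit. Unset Printing Implicit Defensive.
Local Open Scope classical_set_scope.

(* The carrier of F(X): nonempty finite subsets of X. *)
Definition finsub (X : Type) := {A : set X | finite_set A /\ A !=set0}.

HB.instance Definition _ (X : Type) := gen_eqMixin (finsub X).
HB.instance Definition _ (X : Type) := gen_choiceMixin (finsub X).

Definition vietoris_index (X : Type) := seq (set X).
HB.instance Definition _ (X : Type) := gen_eqMixin (vietoris_index X).
HB.instance Definition _ (X : Type) := gen_choiceMixin (vietoris_index X).
HB.instance Definition _ (X : Type) :=
  isPointed.Build (vietoris_index X) [::].

Definition vietoris_basic (X : Type) (s : vietoris_index X) : set (finsub X) :=
  [set A | proj1_sig A `<=` \bigcup_(U in [set U | U \in s]) U /\
           forall U, U \in s -> proj1_sig A `&` U !=set0].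

Definition vietoris_dom (X : topologicalType) : set (vietoris_index X) :=
  [set s | forall U, U \in s -> open U].

Definition vietoris (X : topologicalType) := finsub X.
HB.instance Definition _ (X : topologicalType) := Choice.on (vietoris X).
(* The Vietoris topology: the topology generated by the sets <U_1,...,U_k>
   (they form a base, so the topology they generate as a subbase is the
   same as the one they generate as a base). *)
HB.instance Definition _ (X : topologicalType) :=
  isSubBaseTopological.Build (vietoris X) (@vietoris_dom X) (@vietoris_basic X).

Definition c_semi_stratifiable (Y : topologicalType) : Prop :=
  exists G : nat -> set Y -> set Y,
    [/\ (forall n C, compact C -> open (G n C)),
        (forall C, compact C -> C = \bigcap_(n in [set: nat]) G n C) &
        (forall C F, compact C -> compact F -> C `<=` F ->
           forall n, G n C `<=` G n F)].

(* Main.v *)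
Require Import Defs.
From mathcomp Require Import all_boot all_order.
From mathcomp Require Import all_classical all_reals all_analysis.
From HB Require Import structures.
From mathcomp Require Import finmap.
From mathcomp Require Import all_classical all_reals all_analysis.
Set Implicit Arguments. Unset Strict Implicit. Unset Printing Implicit Defensive.
Local Open Scope classical_set_scope.

Section V.
Variable X : topologicalType.
Local Notation V := (vietoris X).

Lemma basic_open (s : vietoris_index X) : vietoris_dom s ->
  open (vietoris_basic s : set V).
Proof.
move=> ds. exists [set vietoris_basic s].
  move=> _ ->. exists [fset s]%fset.
    by move=> i; rewrite !inE => ->.
  by rewrite set_fset1 bigcap_set1.
by rewrite bigcup_set1.
Qed.

Lemma nbhs_basic (A : V) (O : set V) : nbhs A O ->
  exists2 D' : {fset vietoris_index X}, (forall s, s \in D' -> vietoris_dom s /\ vietoris_basic s A) &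
   \bigcap_(s in [set` D']) vietoris_basic s `<=` O.
Proof.
rewrite nbhsE => -[B [oB BA] BO].
case: oB => D0 sD0 eB.
move: BA; rewrite -eB => -[C D0C CA].
have [D' sD' eC] := sD0 _ D0C.
exists D'.
  move=> s sD; split; first by have := sD' _ sD; rewrite inE.
  by move: CA; rewrite -eC; apply.
move=> P HP; apply: BO; rewrite -eB; exists C => //.
by rewrite -eC.
Qed.

Definition S (A : V) : set X := proj1_sig A.

Lemma finsub_inj (A B : V) : S A = S B -> A = B.
Proof.
case: A => a pa; case: B => b pb /= eab; subst b.
by rewrite (Prop_irrelevance pa pb).
Qed.

Lemma S_fin (A : V) : finite_set (S A).
Proof. by case: A => a [] . Qed.

Lemma S_n0 (A : V) : S A !=set0.
Proof. by case: A => a [] . Qed.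

Definition sing (x : X) : V :=
  exist _ [set x] (conj (finite_set1 x) (@ex_intro _ (fun y => [set x] y) x erefl)).

End V.
Arguments sing {X} x.
Arguments S {X} A.

Lemma near_seq {T : eqType} {I : Type} (F : set_system I) (FF : Filter F)
  (s : seq T) (Q : T -> I -> Prop) :
  (forall a, a \in s -> \forall i \near F, Q a i) ->
  \forall i \near F, forall a, a \in s -> Q a i.
Proof.
elim: s => [|a s IH] H.
  by apply: nearW => i a; rewrite in_nil.
have H1 := H a (mem_head _ _).
have H2 : \forall i \near F, forall b, b \in s -> Q b i.
  by apply: IH => b bs; apply: H; rewrite in_cons bs orbT.
apply: filterS (filterI H1 H2) => i [Ha Hs] b; rewrite in_cons => /orP[/eqP->|] //.
exact: Hs.
Qed.


Lemma near_finite {T : choiceType} {I : Type} (F : set_system I) (FF : Filter F)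
  (A : set T) (Q : T -> I -> Prop) : finite_set A ->
  (forall a, A a -> \forall i \near F, Q a i) ->
  \forall i \near F, forall a, A a -> Q a i.
Proof.
move=> /finite_seqP [s ->] H.
by apply: near_seq => a as_; apply: H.
Qed.

Lemma sing_cont (X : topologicalType) : continuous (@sing X).
Proof.
move=> x O /= /nbhs_basic [D' HD' DO].
suff H : nbhs x (\bigcap_(s in [set` D']) (sing @^-1` vietoris_basic s)).
  by apply: filterS H => y Hy; apply: DO => s Ds; apply: Hy.
apply: filter_bigI => s /HD' [ds [Hsub Hmeet]].
have [U0 U0s U0x] := Hsub x erefl.
have : \forall y \near x, forall U, U \in s -> U y.
  apply: near_seq => U Us; apply: open_nbhs_nbhs; split; first exact: ds.
  by have [y [/= -> ]] := Hmeet U Us.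
apply: filterS => y Hy; split.
  by move=> z /= ->; exists U0 => //; apply: Hy.
by move=> U Us; exists y; split => //; apply: Hy.
Qed.

Lemma dir2 (X : topologicalType) :
  c_semi_stratifiable (vietoris X) -> c_semi_stratifiable X.
Proof.
move=> [G [Gop Gint Gmono]].
have cpt : forall C : set X, compact C -> compact (sing @` C).
  move=> C cC; have h := @continuous_subspaceT X _ C _ (@sing_cont X).
  exact (continuous_compact h cC).
exists (fun n C => sing @^-1` (G n (sing @` C))); split.
- move=> n C cC; have o := Gop n _ (cpt _ cC).
  apply: (@open_comp X _ sing _ _ o) => x _.
  exact (@sing_cont X x).
- move=> C cC; rewrite eqEsubset; split.
    move=> x Cx n _ /=.
    have : (sing @` C) (sing x) by exists x.
    by rewrite {1}(Gint _ (cpt _ cC)); apply.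
  move=> x Hx.
  have : (\bigcap_(n in [set: nat]) G n (sing @` C)) (sing x) by move=> n _; exact: Hx.
  rewrite -{1}(Gint _ (cpt _ cC)) => -[c Cc].
  move=> /(congr1 S) /= e.
  have : [set c] c by [].
  by rewrite e => <-.
- move=> C F cC cF CF n; apply: preimage_subset; apply: Gmono; try exact: cpt.
  exact: image_subset.
Qed.

Lemma sep_fin (X : topologicalType) : hausdorff_space X ->
  forall (a : X) (s : seq X), ~ [set` s] a ->
  exists U W : set X, [/\ open U, open W, U a, [set` s] `<=` W & U `&` W = set0].
Proof.
move=> hX a; elim=> [|b s IH] Ha.
  exists setT, set0; split => //; [exact: openT|exact: open0|by rewrite setI0].
have ab : a != b by apply/eqP => ab; apply: Ha; rewrite /= ab mem_head.
move: hX; rewrite open_hausdorff => /(_ a b ab).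
move=> [[U1 W1] /= [aU1 bW1] [oU1 oW1 /eqP UW1]].
have [|U2 [W2 [oU2 oW2 aU2 sW2 UW2]]] := IH.
  by move=> /= as_; apply: Ha; rewrite /= in_cons as_ orbT.
exists (U1 `&` U2), (W1 `|` W2); split.
- exact: openI.
- exact: openU.
- by split => //; move: aU1; rewrite inE.
- move=> y /=; rewrite in_cons => /orP [/eqP ->|ys]; first by left; move: bW1; rewrite inE.
  by right; apply: sW2.
- rewrite setIUr; apply/seteqP; split => // y [[[y1 y2] y3]|[[y1 y2] y3]].
    by have : (U1 `&` W1) y by []; rewrite UW1.
  by have : (U2 `&` W2) y by []; rewrite UW2.
Qed.

Lemma mem_setseq (T : Type) (V W : set T) (s : seq (set T)) :
  V \in W :: s -> V = W \/ V \in s.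
Proof. rewrite in_cons => /orP [/eqP e|]; [left|by right]. exact: e. Qed.

Lemma vietoris_hausdorff (X : topologicalType) : hausdorff_space X ->
  hausdorff_space (vietoris X).
Proof.
move=> hX.
have key : forall (A B : vietoris X) a, S A a -> ~ S B a ->
  exists P Q : set (vietoris X), [/\ open P, open Q, P A, Q B & P `&` Q = set0].
  move=> A B a Aa Ba.
  have [s es] := (finite_seqP (S B)).1 (S_fin B).
  have [U [W [oU oW aU sW UW]]] : exists U W : set X, [/\ open U, open W, U a, [set` s] `<=` W & U `&` W = set0].
    by apply: sep_fin => //; rewrite -es.
  exists (vietoris_basic [:: U; setT]), (vietoris_basic [:: W]); split.
  - apply: basic_open => V /mem_setseq [->//|/mem_setseq [->|]]; last by rewrite in_nil.
    exact: openT.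
  - by apply: basic_open => V /mem_setseq [->//|]; rewrite in_nil.
  - split.
      by move=> x Ax; exists setT; [apply: mem_behead; exact: mem_head|].
    move=> V /mem_setseq [->|/mem_setseq [->|]]; last by rewrite in_nil.
      by exists a.
    by have [y Ay] := S_n0 A; exists y.
  - split.
      by move=> x Bx; exists W; [exact: mem_head|apply: sW; rewrite -es].
    move=> V /mem_setseq [->|]; last by rewrite in_nil.
    by have [y By] := S_n0 B; exists y; split => //; apply: sW; rewrite -es.
  - apply/seteqP; split => // C [[_ HU] [HW _]].
    have [c [Cc Uc]] := HU U (mem_head _ _).
    have [V] := HW c Cc; move=> /mem_setseq [->|]; last by rewrite in_nil.
    by move=> Wc; have : (U `&` W) c by []; rewrite UW.
rewrite open_hausdorff => A B /eqP AB.
have : S A <> S B by move=> e; apply: AB; exact: finsub_inj.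
move=> nAB.
have [[a Aa Ba]|[b Bb Ab]] : (exists2 a, S A a & ~ S B a) \/ (exists2 b, S B b & ~ S A b).
- apply: contrapT => H; apply: nAB; apply/seteqP; split => x Hx; apply: contrapT => Hn; apply: H.
    by left; exists x.
  by right; exists x.
- have [P [Q [oP oQ PA QB PQ]]] := key A B a Aa Ba.
  exists (P, Q) => /=; first by split; rewrite inE.
  by split => //; apply/eqP.
- have [P [Q [oP oQ PA QB PQ]]] := key B A b Bb Ab.
  exists (Q, P) => /=; first by split; rewrite inE.
  by split => //; apply/eqP; rewrite setIC.
Qed.

Lemma fin_unif (X : topologicalType) (I : Type) (F : set_system I) (FF : Filter F)
  (P : I -> X -> Prop) (s : seq X) :
  (forall x, x \in s -> \forall x' \near x & i \near F, P i x') ->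
  exists2 E, F E & exists W, [/\ open W, [set` s] `<=` W & forall x i, W x -> E i -> P i x].
Proof.
elim: s => [|b s IH] H.
  exists setT; first exact: filterT.
  by exists set0; split => //; exact: open0.
have [E1 FE1 [W1 [oW1 sW1 h1]]] := IH (fun x xs => H x (@mem_behead _ (b :: s) x xs)).
have := H b (mem_head _ _).
case => -[U E2] /= [nU FE2] sub.
move: nU; rewrite nbhsE => -[U' [oU' U'b] U'U].
exists (E1 `&` E2); first exact: filterI.
exists (W1 `|` U'); split; first exact: openU.
  move=> x /=; rewrite in_cons => /orP [/eqP ->|xs]; first by right.
  by left; apply: sW1.
move=> x i [W1x|U'x] [E1i E2i]; first exact: h1.
by apply: (sub (x, i)); split => //; apply: U'U.
Qed.

Lemma union_compact (X : topologicalType) (K : set (vietoris X)) :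
  compact K -> compact (\bigcup_(B in K) S B).
Proof.
move=> cK; apply/compact_near_coveringP => I F P FF cover.
have cK' := (compact_near_coveringP K).1 cK.
have := cK' I F (fun i B => S B `<=` P i) FF.
move=> H; suff : \forall i \near F, K `<=` (fun B => S B `<=` P i).
  by apply: filterS => i Hi x [B KB Bx]; exact: Hi B KB x Bx.
apply: H => B KB.
have [s es] := (finite_seqP (S B)).1 (S_fin B).
have [E FE [W [oW sW h]]] : exists2 E, F E & exists W, [/\ open W, [set` s] `<=` W & forall x i, W x -> E i -> P i x].
  apply: fin_unif => x xs; apply: cover; exists B => //; rewrite es.
  exact: xs.
exists (vietoris_basic [:: W], E) => /=; last first.
  move=> [B' i] /= [[HB' _] Ei] x B'x.
  have [V] := HB' x B'x; move=> /mem_setseq [->|]; last by rewrite in_nil.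
  by move=> Wx; exact: h.
split => //; apply: open_nbhs_nbhs; split.
  by apply: basic_open => V /mem_setseq [->//|]; rewrite in_nil.
split.
  by move=> x Bx; exists W; [exact: mem_head|apply: sW; rewrite -es].
move=> V /mem_setseq [->|]; last by rewrite in_nil.
by have [y By] := S_n0 B; exists y; split => //; apply: sW; rewrite -es.
Qed.

Section Dir1.
Variable X : topologicalType.
Variable G : nat -> set X -> set X.
Hypothesis Gop : forall n C, compact C -> open (G n C).
Hypothesis Gint : forall C, compact C -> C = \bigcap_(n in [set: nat]) G n C.
Hypothesis Gmono : forall C F, compact C -> compact F -> C `<=` F -> forall n, G n C `<=` G n F.

Fixpoint Gd (n : nat) (C : set X) : set X :=
  match n with 0 => G 0 C | m.+1 => Gd m C `&` G m.+1 C end.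

Lemma Gd_open n C : compact C -> open (Gd n C).
Proof. by move=> cC; elim: n => [|n IH] /=; [exact: Gop|apply: openI => //; exact: Gop]. Qed.

Lemma Gd_G n C : Gd n C `<=` G n C.
Proof. by case: n => [|n] //= x []. Qed.

Lemma sub_Gd n C : compact C -> C `<=` Gd n C.
Proof.
move=> cC x Cx; have : (\bigcap_(n in [set: nat]) G n C) x by rewrite -Gint.
by move=> H; elim: n => [|n IH] /=; [exact: H|split => //; exact: H].
Qed.

Lemma Gd_mono C F : compact C -> compact F -> C `<=` F -> forall n, Gd n C `<=` Gd n F.
Proof.
move=> cC cF CF; elim => [|n IH] /=; first exact: Gmono.
by move=> x [/IH h1 /(Gmono cC cF CF) h2].
Qed.

Lemma Gd_dec C m n : (m <= n)%N -> Gd n C `<=` Gd m C.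
Proof.
elim: n => [|n IH]; first by rewrite leqn0 => /eqP ->.
rewrite leq_eqVlt => /orP [/eqP ->//|]; rewrite ltnS => /IH h x [/h]. done.
Qed.

Definition g n (x : X) := Gd n [set x].

Lemma keyP C y : compact C -> ~ C y -> \forall n \near \oo, forall x, C x -> ~ g n x y.
Proof.
move=> cC Cy.
have [N HN] : exists N, ~ G N C y.
  apply: contrapT => H; apply: Cy; rewrite (Gint cC) => n _.
  by apply: contrapT => h; apply: H; exists n.
exists N => // n /= Nn x Cx gy; apply: HN.
apply: Gd_G; apply: (@Gd_dec C N n Nn).
have s1 : [set x] `<=` C by move=> z ->.
exact: (Gd_mono (@compact_set1 X x) cC s1 gy).
Qed.


Definition GG n (KK : set (vietoris X)) : set (vietoris X) :=
  [set A | exists2 B, KK B & S A `<=` \bigcup_(b in S B) g n b /\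
                           (forall b, S B b -> S A `&` g n b !=set0)].

Lemma GG_open n KK : open (GG n KK).
Proof.
rewrite openE => A [B KB [h1 h2]].
have [s es] := (finite_seqP (S B)).1 (S_fin B).
pose t := map (g n) s.
have ot : vietoris_dom t.
  by move=> U /mapP [b _ ->]; apply: Gd_open; exact: compact_set1.
have At : vietoris_basic t A.
  split.
    move=> x Ax; have [b Bb gbx] := h1 x Ax; exists (g n b) => //.
    by apply: map_f; move: Bb; rewrite es.
  by move=> U /mapP [b bs ->]; apply: h2; rewrite es.
have sub : vietoris_basic t `<=` GG n KK.
  move=> A' [h1' h2']; exists B => //; split.
    move=> x A'x; have [U /mapP [b bs ->] gx] := h1' x A'x.
    by exists b => //; rewrite es.
  by move=> b Bb; apply: h2'; apply: map_f; move: Bb; rewrite es.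
apply: filterS sub _; apply: open_nbhs_nbhs; split => //; exact: basic_open.
Qed.

Lemma dir1 : hausdorff_space X -> c_semi_stratifiable (vietoris X).
Proof.
move=> hX; exists GG; split.
- by move=> n C _; exact: GG_open.
- move=> KK cKK; rewrite eqEsubset; split.
    move=> B KB n _; exists B => //; split.
      by move=> x Bx; exists x => //; exact: (sub_Gd n (@compact_set1 X x)).
    by move=> b Bb; exists b; split => //; exact: (sub_Gd n (@compact_set1 X b)).
  move=> A HA; apply: contrapT => nKA.
  have clK : closed KK := compact_closed (vietoris_hausdorff hX) cKK.
  have : nbhs A (~` KK).
    by apply: open_nbhs_nbhs; split => //; exact: closed_openC.
  move=> /nbhs_basic [D' HD' DK].
  pose K := \bigcup_(B in KK) S B.
  have cK : compact K := union_compact cKK.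
  pose f s := [set n | forall B, KK B ->
     (S A `<=` \bigcup_(b in S B) g n b /\ (forall b, S B b -> S A `&` g n b !=set0)) ->
     vietoris_basic s B].
  have claim : forall s, s \in D' -> \forall n \near \oo, f s n.
    move=> s /HD' [ds [As1 As2]].
    pose W := \bigcup_(U in [set U | U \in s]) U.
    have oW : open W by apply: bigcup_open => U Us; exact: ds.
    have Ha : \forall n \near \oo, forall a, S A a -> forall x, (K `&` ~` W) x -> ~ g n x a.
      apply: near_finite (S_fin A) _ => a Aa; apply: keyP.
        exact: compact_closedI cK (open_closedC oW).
      by move=> [_]; apply; exact: As1.
    have Hb : \forall n \near \oo, forall U, U \in s -> forall a, S A a -> U a ->
        forall x, (K `&` ~` U) x -> ~ g n x a.
      apply: near_seq => U Us; apply: near_finite (S_fin A) _ => a Aa.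
      have [Ua|nUa] := pselect (U a); last by apply: nearW => n /nUa.
      have cKU : compact (K `&` ~` U).
        exact: compact_closedI cK (open_closedC (ds U Us)).
      have nKUa : ~ (K `&` ~` U) a by move=> [].
      by apply: filterS (keyP cKU nKUa) => n h _.
    apply: filterS (filterI Ha Hb) => n [ha hb] B KB [h1 h2]; split.
      move=> b Bb; have [a [Aa gba]] := h2 b Bb; apply: contrapT => nWb.
      by apply: (ha a Aa b) => //; split => //; exists B.
    move=> U Us; have [a [Aa Ua]] := As2 U Us; have [b Bb gba] := h1 a Aa.
    exists b; split => //; apply: contrapT => nUb.
    by apply: (hb U Us a Aa Ua b) => //; split => //; exists B.
  have H : (\oo : set_system nat) (\bigcap_(i in [set` D']) f i).
    by apply: filter_bigI; exact: claim.
  have [n Hn] := filter_ex H.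
  have [B KB hB] := HA n I.
  apply: (DK B) => //; move=> s Ds; exact: Hn s Ds B KB hB.
- by move=> C F _ _ CF n A [B CB h]; exists B => //; apply: CF.
Qed.

End Dir1.

Theorem theorem4p9 (X : topologicalType) :
  regular_space X -> hausdorff_space X ->
  (c_semi_stratifiable X <-> c_semi_stratifiable (vietoris X)).
Proof.
move=> _ hX; split; last exact: dir2.
by move=> [G [Gop Gint Gmono]]; exact: (dir1 Gop Gint Gmono hX).
Qed.
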